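(* Let $v\in A$ be a monic irreducible polynomial of degree $d$, and let $\lambda$ (an element of the algebraic closure of $\mathbb{F}_q$ in $\mathbb{C}_\infty$) be a root of $v$, viewed as a polynomial in $\theta$ over $\mathbb{F}_q$. Then \[(-1)^d v=\prod_{i=1}^d \omega(\lambda^{q^i})^{q-1}.\]
   Context: $A=\mathbb{F}_q[\theta]$; $\mathbb{C}_\infty$ the completion of an algebraic closure of the completion of $\mathbb{F}_q(\theta)$ for $|\theta|=q$. Fix $\iota\in\mathbb{C}_\infty$ with $\iota^{q-1}=-\theta$; $\omega(t)=\iota\prod_{j\ge0}(1-t/\theta^{q^j})^{-1}$, a power series in $t$ converging for $|t|\le1$ (so it can be evaluated at $\lambda$, which satisfies $|\lambda|=1$). *)

(* Defs.v *)
From HB Require Import structures.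
From mathcomp Require Import all_boot all_order all_algebra all_field.
Set Implicit Arguments. Unset Strict Implicit. Unset Printing Implicit Defensive.
Import Order.TTheory GRing.Theory Num.Theory.
Local Open Scope ring_scope.

Definition converges (C : fieldType) (R : realFieldType) (abs : C -> R)
  (u : nat -> C) (l : C) : Prop :=
  forall eps : R, 0 < eps -> exists N : nat, forall n : nat, (N <= n)%N ->
    abs (u n - l) < eps.

Definition cauchy (C : fieldType) (R : realFieldType) (abs : C -> R)
  (u : nat -> C) : Prop :=
  forall eps : R, 0 < eps -> exists N : nat, forall m n : nat,
    (N <= m)%N -> (N <= n)%N -> abs (u m - u n) < eps.

Definition complete (C : fieldType) (R : realFieldType) (abs : C -> R) : Prop :=
  forall u : nat -> C, cauchy abs u -> exists l : C, converges abs u l.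

(* Partial products of omega(t) = iota * prod_{j>=0} (1 - t/theta^{q^j})^{-1}. *)
Definition omega_partial (C : fieldType) (io theta : C) (q : nat) (t : C)
  (N : nat) : C :=
  io * \prod_(j < N) (1 - t / theta ^+ (q ^ j))^-1.

Definition is_omega_value (C : fieldType) (R : realFieldType) (abs : C -> R)
  (io theta : C) (q : nat) (t w : C) : Prop :=
  converges abs (omega_partial io theta q t) w.

(* Main.v *)
Require Import Defs.
From HB Require Import structures.
From mathcomp Require Import all_boot all_order all_algebra all_field.
Import Order.TTheory GRing.Theory Num.Theory.
Local Open Scope ring_scope.
From mathcomp Require Import ring lra.
Set Implicit Arguments.


Record qpc (C : fieldType) := QPC { qv : nat; qvP : [pchar C].-nat qv }.
Definition frobq (C : fieldType) (Q : qpc C) (x : C) := x ^+ qv Q.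

Lemma frobq_nmod (C : fieldType) (Q : qpc C) : nmod_morphism (frobq Q).
Proof.
case: Q => q Hq; split; first by rewrite /frobq /= expr0n; case: q Hq => //= q; rewrite /pnat.
by move=> x y; rewrite /frobq exprDn_pchar.
Qed.
Lemma frobq_monoid (C : fieldType) (Q : qpc C) : monoid_morphism (frobq Q).
Proof. by split; [rewrite /frobq expr1n | move=> x y; rewrite /frobq exprMn]. Qed.

HB.instance Definition _ (C : fieldType) (Q : qpc C) :=
  GRing.isNmodMorphism.Build C C (frobq Q) (frobq_nmod Q).
HB.instance Definition _ (C : fieldType) (Q : qpc C) :=
  GRing.isMonoidMorphism.Build C C (frobq Q) (frobq_monoid Q).

Lemma qnat (F : finFieldType) (C : fieldType) (iota : {rmorphism F -> C}) :
  [pchar C].-nat #|F|.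
Proof.
have [p pp pc] := finPcharP F.
have hk := card_pprimeChar pc.
have pcC := rmorph_pchar iota pc.
rewrite (eq_pnat _ (pcharf_eq pcC)).
have -> : #|F| = (p ^ logn p #|F|)%N by exact: hk.
by rewrite pnatX pnat_id.
Qed.

Lemma frobq_inj (C : fieldType) (Q : qpc C) x y : frobq Q x = frobq Q y -> x = y.
Proof.
move=> h; apply/eqP; rewrite -subr_eq0.
have : frobq Q (x - y) == 0.
  by rewrite (rmorphB (frobq Q)) /= h subrr.
rewrite /frobq expf_eq0 => /andP[_ ->] //.
Qed.

Lemma frobq_iter (C : fieldType) (Q : qpc C) i (x : C) : x ^+ (qv Q ^ i)%N = iter i (frobq Q) x.
Proof.
elim: i => [|i IH]; first by rewrite expn0 expr1.
by rewrite expnSr exprM IH /=.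
Qed.

Lemma frobq_iter_inj (C : fieldType) (Q : qpc C) i (x y : C) :
  x ^+ (qv Q ^ i)%N = y ^+ (qv Q ^ i)%N -> x = y.
Proof.
rewrite !frobq_iter; elim: i => [|i IH] //= h.
apply: IH. move: h; apply: frobq_inj.
Qed.



Lemma factorV (F : finFieldType) (C : fieldType) (phi : {rmorphism F -> C})
  (v : {poly F}) (d : nat) (Hmonic : v \is monic) (Hirr : irreducible_poly v)
  (Hdeg : size v = d.+1) (lam : C) (Hroot : root (map_poly phi v) lam) :
  lam ^+ (#|F| ^ d)%N = lam /\
  map_poly phi v = \prod_(i < d) ('X - (lam ^+ (#|F| ^ i)%N)%:P).
Proof.
pose Q := @QPC C #|F| (qnat phi).
set V := map_poly phi v.
pose f i := lam ^+ (#|F| ^ i)%N.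
have fS i : f i.+1 = frobq Q (f i) by rewrite /f /frobq /= expnSr exprM.
have fixF c : frobq Q (phi c) = phi c by rewrite /frobq /= -rmorphXn expf_card.
have mapV : map_poly (frobq Q) V = V.
  rewrite /V -map_poly_comp; apply: eq_map_poly => c /=; exact: fixF.
have rootf i : root V (f i).
  elim: i => [|i IH]; first by rewrite /f expn0 expr1.
  by rewrite fS; apply/rootP; rewrite -{1}mapV horner_map (rootP IH) rmorph0.
have V0 : V != 0 by rewrite map_poly_eq0 -size_poly_eq0 Hdeg.
have sV : size V = d.+1 by rewrite size_map_poly.
have hdiff i j : (i < j)%N -> f i = f j -> f (j - i)%N = lam.
  move=> ij fij; apply: (@frobq_iter_inj _ Q i).
  rewrite /= -/(f i) fij /f -exprM -expnD subnK //; exact: ltnW.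
have [k [k0 kd fk]] : exists k, [/\ (0 < k)%N, (k <= d)%N & f k = lam].
  pose rs := [seq f i | i <- iota 0 d.+1].
  have : ~~ uniq rs.
    apply/negP => urs.
    have hall : all (root V) rs by apply/allP => x /mapP [i _ ->]; exact: rootf.
    by have := max_poly_roots V0 hall urs; rewrite size_map size_iota sV ltnn.
  case/(uniqPn 0) => i [j [ij jrs]]; rewrite size_map size_iota in jrs.
  rewrite !(nth_map 0%N) ?size_iota //; last exact: ltn_trans ij jrs.
  rewrite !nth_iota ?add0n //; last exact: ltn_trans ij jrs.
  move=> fij; exists (j - i)%N; split; first by rewrite subn_gt0.
    by rewrite (leq_trans (leq_subr _ _)).
  exact: hdiff.
have exm : exists m, (0 < m)%N && (f m == lam) by exists k; rewrite k0 fk eqxx.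
case: (ex_minnP exm) => m /andP[m0 /eqP fm] mmin.
have md : (m <= d)%N by apply: leq_trans (mmin k _) kd; rewrite k0 fk eqxx.
have fper i : f (i + m)%N = f i.
  by move: fm; rewrite /f => fm'; rewrite expnD mulnC exprM fm'.
pose rs := [seq f i | i <- iota 0 m].
have urs : uniq rs.
  rewrite map_inj_in_uniq ?iota_uniq // => i j.
  rewrite !mem_iota !add0n => /andP[_ im] /andP[_ jm] fij.
  case: (ltngtP i j) => // ij.
    have := mmin (j - i)%N; rewrite subn_gt0 ij hdiff // eqxx => /(_ isT).
    by rewrite leqNgt (leq_ltn_trans (leq_subr _ _) jm).
  have := mmin (i - j)%N; rewrite subn_gt0 ij hdiff // eqxx => /(_ isT).
  by rewrite leqNgt (leq_ltn_trans (leq_subr _ _) im).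
pose h := \prod_(a <- rs) ('X - a%:P).
have hdV : h %| V.
  apply: uniq_roots_dvdp; last by rewrite uniq_rootsE.
  by apply/allP => x /mapP [i _ ->]; exact: rootf.
have hmap : map_poly (frobq Q) h = h.
  rewrite /h map_prod_XsubC -(big_map (frobq Q) xpredT (fun a => 'X - a%:P)).
  apply: perm_big.
  have -> : [seq frobq Q i | i <- rs] = [seq f i | i <- iota 1 m].
    rewrite /rs -map_comp (iotaDl 1 0) -map_comp; apply: eq_map => i /=.
    by rewrite fS.
  have fp := fper 0%N; rewrite /rs.
  have [m' em] : exists m', m = m'.+1 by exists m.-1; rewrite prednK.
  rewrite em -addn1 iotaD map_cat /= add0n in fp *.
  by rewrite perm_catC addn1 /= add1n -(addn1 m') fp.
have hfix i : (h`_i) ^+ #|F| = h`_i.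
  by have := congr1 (fun p : {poly C} => p`_i) hmap; rewrite /= coef_map.
have pre c : c ^+ #|F| = c -> exists x, phi x = c.
  move=> hc.
  have : root (map_poly phi ('X^#|F| - 'X)) c.
    by rewrite rmorphB /= map_polyXn map_polyX rootE !hornerE hc subrr.
  rewrite finField_genPoly map_prod_XsubC.
  rewrite -(big_map phi xpredT (fun a => 'X - a%:P)) root_prod_XsubC.
  by case/mapP => x _ ->; exists x.
pose h0 := \poly_(i < size h) odflt 0 [pick x | phi x == h`_i].
have hh0 : map_poly phi h0 = h.
  apply/polyP => i; rewrite coef_map coef_poly.
  case: ltnP => hi; last by rewrite nth_default //; exact: rmorph0.
  case: pickP => [x /eqP //|none].
  have [x hx] := pre _ (hfix i).
  by move: (none x); rewrite hx eqxx.
have h0v : h0 %| v by rewrite -(dvdp_map phi) hh0.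
have sh0 : size h0 = m.+1.
  by rewrite -(size_map_poly phi) hh0 size_prod_XsubC size_map size_iota.
have mh0 : h0 \is monic by rewrite -(map_monic phi) hh0 monic_prod_XsubC.
have eh0 : h0 = v.
  apply/eqP; rewrite -eqp_monic //; apply: Hirr.2 h0v.
  by rewrite sh0 eqSS -lt0n.
have md' : m = d by apply/eqP; rewrite -eqSS -sh0 eh0 Hdeg.
split; first by move: fm; rewrite md'.
rewrite /V -eh0 hh0 /h big_map /rs -md'.
by rewrite -{1}(subn0 m) -/(index_iota 0 m) big_mkord.
Qed.


Definition absOK (C : fieldType) (R : realFieldType) (abs : C -> R) :=
  [/\ (forall x : C, abs x = 0 <-> x = 0), (forall x : C, 0 <= abs x),
      (forall x y : C, abs (x * y) = abs x * abs y) &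
      (forall x y : C, abs (x + y) <= Num.max (abs x) (abs y))].

Arguments absOK {C R} abs.

Lemma abs1 (C : fieldType) (R : realFieldType) (abs : C -> R) :
  absOK abs -> abs 1 = 1.
Proof.
case=> H0 _ HM _.
have h : abs 1 * abs 1 = abs 1 * 1 by rewrite -HM !mulr1.
apply: (mulfI _ h); apply/eqP => /H0; exact/eqP/oner_neq0.
Qed.

Lemma absN1 (C : fieldType) (R : realFieldType) (abs : C -> R) :
  absOK abs -> abs (-1) = 1.
Proof.
move=> H; have h1 := abs1 H; case: H => H0 Hge HM _.
have h : abs (-1) * abs (-1) = 1 by rewrite -HM mulrNN mulr1.
have hg := Hge (-1).
set a := abs (-1) in h hg *.
apply/eqP; rewrite eq_le; apply/andP; split; nra.
Qed.

Lemma absN (C : fieldType) (R : realFieldType) (abs : C -> R) (H : absOK abs) x :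
  abs (- x) = abs x.
Proof. have h := absN1 H; case: H => _ _ HM _; by rewrite -mulN1r HM h mul1r. Qed.

Lemma absBC (C : fieldType) (R : realFieldType) (abs : C -> R) (H : absOK abs) x y :
  abs (x - y) = abs (y - x).
Proof. by rewrite -opprB absN. Qed.

Lemma absX (C : fieldType) (R : realFieldType) (abs : C -> R) (H : absOK abs) x n :
  abs (x ^+ n) = abs x ^+ n.
Proof.
have h1 := abs1 H; case: H => _ _ HM _.
by elim: n => [|n IH]; rewrite ?expr0 ?h1 // !exprS HM IH.
Qed.

Lemma abs_eq0 (C : fieldType) (R : realFieldType) (abs : C -> R) (H : absOK abs) x :
  (abs x == 0) = (x == 0).
Proof. by case: H => H0 _ _ _; apply/eqP/eqP => [/H0|/H0]. Qed.

Lemma abs_gt0 (C : fieldType) (R : realFieldType) (abs : C -> R) (H : absOK abs) x :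
  x != 0 -> 0 < abs x.
Proof. by move=> nz; rewrite lt_def (abs_eq0 H) nz; case: H => _ ->. Qed.

Lemma absV (C : fieldType) (R : realFieldType) (abs : C -> R) (H : absOK abs) x :
  abs (x ^-1) = (abs x)^-1.
Proof.
have a0 : abs 0 = 0 by case: H => H0 _ _ _; exact/H0.
have [->|nz] := eqVneq x 0; first by rewrite invr0 a0 invr0.
have h1 := abs1 H; have ax : abs x != 0 by rewrite abs_eq0.
case: H => _ _ HM _.
have h : abs x * abs x^-1 = abs x * (abs x)^-1 by rewrite -HM !mulfV.
exact: (mulfI ax h).
Qed.

Lemma ultra_le (C : fieldType) (R : realFieldType) (abs : C -> R) (H : absOK abs) x y e :
  abs x <= e -> abs y <= e -> abs (x + y) <= e.
Proof.
case: H => _ _ _ HU hx hy; apply: le_trans (HU x y) _.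
by rewrite ge_max hx hy.
Qed.

Lemma ultra_lt (C : fieldType) (R : realFieldType) (abs : C -> R) (H : absOK abs) x y e :
  abs x < e -> abs y < e -> abs (x + y) < e.
Proof.
case: H => _ _ _ HU hx hy; apply: le_lt_trans (HU x y) _.
by rewrite gt_max hx hy.
Qed.

Lemma conv_uniq (C : fieldType) (R : realFieldType) (abs : C -> R) (H : absOK abs) u a b :
  converges abs u a -> converges abs u b -> a = b.
Proof.
move=> ha hb; apply/eqP; rewrite -subr_eq0; apply: contraT => nz.
have e : 0 < abs (a - b) by exact: abs_gt0.
have [N1 h1] := ha _ e; have [N2 h2] := hb _ e.
have := h1 (maxn N1 N2) (leq_maxl _ _); have := h2 (maxn N1 N2) (leq_maxr _ _).
set x := u _ => hx hy.
have : abs ((x - b) + - (x - a)) < abs (a - b) by apply: ultra_lt; rewrite ?absN.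
have -> : (x - b) + - (x - a) = a - b by ring.
by rewrite ltxx.
Qed.

Lemma conv_mul (C : fieldType) (R : realFieldType) (abs : C -> R) (H : absOK abs) u v a b :
  converges abs u a -> converges abs v b ->
  converges abs (fun n => u n * v n) (a * b).
Proof.
move=> hu hv eps he.
have Hge := (let: And4 _ g _ _ := H in g).
have HM := (let: And4 _ _ g _ := H in g).
pose B := Num.max (abs b) 1; pose A := abs a + 1.
have hB : 0 < B by rewrite lt_max ltr01 orbT.
have hA : 0 < A by rewrite ltr_wpDl.
have [N0 h0] := hv 1 ltr01.
have [N1 h1] := hu (eps / B) (divr_gt0 he hB).
have [N2 h2] := hv (eps / A) (divr_gt0 he hA).
exists (maxn N0 (maxn N1 N2)) => n; rewrite !geq_max => /and3P[n0 n1 n2].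
have vb : abs (v n) <= B.
  have -> : v n = (v n - b) + b by ring.
  apply: ultra_le => //; last by rewrite le_max lexx.
  by rewrite le_max (ltW (h0 n n0)) orbT.
have -> : u n * v n - a * b = (u n - a) * v n + a * (v n - b) by ring.
apply: ultra_lt => //; rewrite HM.
  have e1 : eps / B * B = eps by rewrite divfK // gt_eqF.
  apply: (le_lt_trans (ler_wpM2l (Hge _) vb)).
  by rewrite -[X in _ < X]e1 ltr_pM2r // h1.
have e1 : A * (eps / A) = eps by rewrite mulrC divfK // gt_eqF.
have ha : abs a <= A by rewrite lerDl ler01.
apply: (le_lt_trans (ler_wpM2r (Hge _) ha)).
by rewrite -[X in _ < X]e1 ltr_pM2l // h2.
Qed.

Lemma conv_cst (C : fieldType) (R : realFieldType) (abs : C -> R) (H : absOK abs) (c : C) :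
  converges abs (fun _ => c) c.
Proof.
move=> eps he; exists 0%N => n _; rewrite subrr.
by have -> : abs 0 = 0 by case: H => H0 _ _ _; exact/H0.
Qed.

Lemma conv_pow (C : fieldType) (R : realFieldType) (abs : C -> R) (H : absOK abs) u a k :
  converges abs u a -> converges abs (fun n => u n ^+ k) (a ^+ k).
Proof.
move=> hu; elim: k => [|k IH].
  move=> eps he; have [N hN] := conv_cst H 1 eps he; exists N => n hn.
  by rewrite !expr0; exact: hN.
move=> eps he; have [N hN] := conv_mul H hu IH eps he; exists N => n hn.
by rewrite !exprS; exact: hN.
Qed.

Lemma conv_scale (C : fieldType) (R : realFieldType) (abs : C -> R) (H : absOK abs) u a c :
  converges abs u a -> converges abs (fun n => c * u n) (c * a).
Proof. by move=> hu eps he; have [N hN] := conv_mul H (conv_cst H c) hu eps he; exists N. Qed.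

Lemma conv_shift (C : fieldType) (R : realFieldType) (abs : C -> R) u a :
  converges abs u a -> converges abs (fun n => u n.+1) a.
Proof. by move=> hu eps he; have [N hN] := hu eps he; exists N => n hn; apply: hN; apply: leqW. Qed.

Lemma conv_nz (C : fieldType) (R : realFieldType) (abs : C -> R) (H : absOK abs) u a c :
  0 < c -> (forall n, abs (u n) = c) -> converges abs u a -> a != 0.
Proof.
move=> hc hu ha; apply/eqP => a0; have [N hN] := ha c hc.
by have := hN N (leqnn N); rewrite a0 subr0 hu ltxx.
Qed.


Lemma om_step (C : fieldType) (Q : qpc C) (io theta x : C) N :
  theta != 0 -> x ^+ qv Q != theta -> io ^+ (qv Q).-1 = - theta -> (0 < qv Q)%N ->
  omega_partial io theta (qv Q) x N ^+ qv Q
  = (x ^+ qv Q - theta) * omega_partial io theta (qv Q) (x ^+ qv Q) N.+1.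
Proof.
move=> t0 xt hio q0.
have hq : io ^+ qv Q = io * - theta by rewrite -[X in io ^+ X](prednK q0) exprS hio.
set q := qv Q.
have step j : ((1 - x / theta ^+ (q ^ j)%N)^-1) ^+ q
             = (1 - x ^+ q / theta ^+ (q ^ j.+1)%N)^-1.
  rewrite exprVn; congr (_^-1).
  change (frobq Q (1 - x / theta ^+ (q ^ j)%N) = 1 - x ^+ q / theta ^+ (q ^ j.+1)%N).
  by rewrite rmorphB rmorph1 rmorphM fmorphV /= /frobq -/q -exprM expnSr.
rewrite /omega_partial (big_ord_recl N) /= expn0 expr1 exprMn -prodrXl.
under eq_bigr => j _ do rewrite step.
rewrite hq.
have ne : 1 - x ^+ q / theta != 0.
  rewrite subr_eq0; apply: contra xt => /eqP e.
  by rewrite (divr1_eq (esym e)).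
set P := \prod_(i < N) _.
field.
by rewrite t0 subr_eq0 eq_sym xt.
Qed.


Lemma abs_1sub (C : fieldType) (R : realFieldType) (abs : C -> R) (H : absOK abs) y :
  abs y < 1 -> abs (1 - y) = 1.
Proof.
move=> hy; have h1 := abs1 H.
have up : abs (1 - y) <= 1 by apply: ultra_le; rewrite ?h1 ?absN // ltW.
apply/eqP; rewrite eq_le up /=; rewrite leNgt; apply/negP => lt.
have : abs ((1 - y) + y) < 1 by apply: ultra_lt.
by rewrite subrK h1 ltxx.
Qed.

Lemma om_abs (C : fieldType) (R : realFieldType) (abs : C -> R) (H : absOK abs)
  (io theta x : C) (q N : nat) :
  abs x <= 1 -> 1 < abs theta -> (0 < q)%N ->
  abs (omega_partial io theta q x N) = abs io.
Proof.
move=> hx ht q0; have h1 := abs1 H.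
have HM := (let: And4 _ _ g _ := H in g).
have Hge := (let: And4 _ g _ _ := H in g).
rewrite /omega_partial HM; suff -> : abs (\prod_(j < N) (1 - x / theta ^+ (q ^ j)%N)^-1) = 1.
  by rewrite mulr1.
elim: N => [|N IH]; first by rewrite big_ord0 h1.
rewrite big_ord_recr /= HM IH mul1r (absV H) (abs_1sub H) ?invr1 //.
rewrite HM (absV H) (absX H).
have tp : 1 < abs theta ^+ (q ^ N)%N.
  apply: (lt_le_trans ht); apply: ler_eXnr; [by rewrite expn_gt0 q0 | exact: ltW ht].
have tp0 : 0 < abs theta ^+ (q ^ N)%N by apply: lt_trans tp; exact: ltr01.
have iT : 0 <= (abs theta ^+ (q ^ N)%N)^-1 by rewrite invr_ge0 ltW.
apply: (le_lt_trans (ler_wpM2r iT hx)).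
by rewrite mul1r invf_lt1.
Qed.

Lemma prod_shift (R : comNzRingType) (g : nat -> R) d :
  (0 < d)%N -> (forall i, g (i + d)%N = g i) ->
  \prod_(i < d) g i.+1 = \prod_(i < d) g i.
Proof.
case: d => // d _ hg.
rewrite big_ord_recr big_ord_recl /= mulrC.
have -> : g d.+1 = g 0%N by rewrite -(hg 0%N) add0n.
by congr (_ * _); apply: eq_bigr => i _; rewrite /= /bump leq0n.
Qed.

Unset Implicit Arguments.

Theorem lemma3p6
  (F : finFieldType) (C : closedFieldType) (R : realFieldType)
  (iotaF : {rmorphism F -> C})
  (abs : C -> R)
  (Habs0 : forall x : C, abs x = 0 <-> x = 0)
  (Habs_ge0 : forall x : C, 0 <= abs x)
  (HabsM : forall x y : C, abs (x * y) = abs x * abs y)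
  (Habs_ultra : forall x y : C, abs (x + y) <= Num.max (abs x) (abs y))
  (Hcomplete : complete abs)
  (theta : C) (Htheta : abs theta = (#|F|)%:R)
  (io : C) (Hio : io ^+ (#|F|).-1 = - theta)
  (v : {poly F}) (d : nat)
  (Hmonic : v \is monic) (Hirr : irreducible_poly v) (Hdeg : size v = d.+1)
  (lam : C) (Hroot : root (map_poly iotaF v) lam)
  (w : nat -> C)
  (Hw : forall i : nat, (1 <= i <= d)%N ->
          is_omega_value abs io theta #|F| (lam ^+ (#|F| ^ i)) (w i)) :
  (-1) ^+ d * (map_poly iotaF v).[theta]
    = \prod_(1 <= i < d.+1) (w i) ^+ (#|F|).-1.
Proof.
have H : absOK abs by split.
have [Hper HV] := @factorV F C iotaF v d Hmonic Hirr Hdeg lam Hroot.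
have q1 : (1 < #|F|)%N := card_finNzRing_gt1 F.
have q0 : (0 < #|F|)%N by apply: ltnW.
pose Q := @QPC C #|F| (qnat iotaF).
set q := #|F| in q1 q0 Hper HV Hw Hio Htheta *.
pose f i := lam ^+ (q ^ i)%N.
have d0 : (0 < d)%N by have := Hirr.1; rewrite Hdeg ltnS.
have fper i : f (i + d)%N = f i.
  by move: Hper; rewrite /f => Hp; rewrite expnD mulnC exprM Hp.
have fperk i k : f (i + k * d)%N = f i.
  by elim: k i => [|k IH] i; rewrite ?mul0n ?addn0 // mulSn addnA IH fper.
have fmod i : f i = f (i %% d)%N.
  by rewrite {1}(divn_eq i d) addnC fperk.
have fS i : f i.+1 = f i ^+ q by rewrite /f expnSr exprM.
have absT : 1 < abs theta by rewrite Htheta ltr1n.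
have t0 : theta != 0.
  by apply/eqP => t0; move: absT; rewrite t0 (proj2 (Habs0 0)) // ltr10.
have absl : abs lam <= 1.
  have e : abs lam ^+ (q ^ d)%N = abs lam by rewrite -(absX H) Hper.
  rewrite leNgt; apply/negP => gt.
  have := ltr_eXn2l gt; move=> /(_ 1%N (q ^ d)%N).
  rewrite e expr1 ltxx => /esym/negbT; rewrite -leqNgt.
  by rewrite leqNgt -[X in (X < _)%N](expn0 q) ltn_exp2l ?d0.
have absf i : abs (f i) <= 1 by rewrite /f (absX H) exprn_ile1.
have fq_ne i : f i ^+ q != theta.
  apply/eqP => e; move: absT; rewrite -e (absX H) ltNge exprn_ile1 //.
have io0 : io != 0.
  apply/eqP => e; move: Hio; rewrite e expr0n.
  case: (q.-1) (ltn_predRL 0 q) => [|n] /=; last by move=> _ /esym/eqP; rewrite oppr_eq0 (negPf t0).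
  by rewrite q1.
pose W i := w (i %% d).+1.
have HW i : converges abs (omega_partial io theta q (f i.+1)) (W i).
  have hi : (1 <= (i %% d).+1 <= d)%N by rewrite /= ltn_pmod.
  have := Hw _ hi; rewrite /is_omega_value.
  have -> : lam ^+ (q ^ (i %% d).+1)%N = f i.+1.
    by rewrite -/(f _) fmod [in RHS]fmod -addn1 -(addn1 i) modnDml.
  by [].
have rel i : W i ^+ q = (f i.+2 - theta) * W i.+1.
  apply: (conv_uniq H (conv_pow H q (HW i))).
  move=> eps he.
  have [N hN] := conv_scale H (f i.+2 - theta) (conv_shift (HW i.+1)) eps he.
  exists N => n hn.
  have := @om_step C Q io theta (f i.+1) n t0 (fq_ne i.+1) Hio q0.
  rewrite /= -fS => ->; exact: hN.
have Wnz i : W i != 0.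
  apply: (conv_nz H _ (fun n => om_abs H io theta (f i.+1) q n (absf i.+1) absT q0) (HW i)).
  exact: abs_gt0.
have Wper i : W (i + d)%N = W i by rewrite /W modnDr.
set Wp := \prod_(i < d) W i.
have Wpnz : Wp != 0 by apply/prodf_neq0 => i _.
have key : Wp ^+ q = (\prod_(i < d) (f i - theta)) * Wp.
  rewrite -prodrXl; under eq_bigr => i _ do rewrite rel.
  rewrite big_split /= (@prod_shift _ (fun i => W i) d d0 Wper).
  rewrite (@prod_shift _ (fun i => f i.+1 - theta) d d0) ?(@prod_shift _ (fun i => f i - theta) d d0) //.
  by move=> i; rewrite fper.
  by move=> i; rewrite -addSn fper.
rewrite HV horner_prod; under eq_bigr => i _ do rewrite hornerXsubC.
rewrite big_add1 /= big_mkord.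
have -> : \prod_(i < d) w i.+1 ^+ q.-1 = Wp ^+ q.-1.
  rewrite -prodrXl; apply: eq_bigr => i _; by rewrite /W modn_small.
apply: (mulIf Wpnz); rewrite -exprSr prednK // key.
congr (_ * _); rewrite -[X in (-1) ^+ X](card_ord d) -prodrN.
by apply: eq_bigr => i _; rewrite opprB.
Qed.
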